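(* Let $n,m\geq1$, let $a_1\geq\cdots\geq a_n$ and $b_1\geq\cdots\geq b_m$ be nonnegative integers, let $0\leq k\leq\nu\leq\min\{n,m\}$ be integers, and let $N=N(d_A,d_B,\nu,k)$. Then some $s$-$t$-cut of minimum capacity in $N$ is clean.
   Context: Network definition: for nonnegative integers $a_1\geq\cdots\geq a_n$, $b_1\geq\cdots\geq b_m$ and integers $0\leq k\leq\nu\leq\min\{n,m\}$, $N(d_A,d_B,\nu,k)=(D,c)$ where $D$ is the digraph with vertex set $\{s,t,v_1,\ldots,v_n,w_1,\ldots,w_m\}$ and arcs: $(s,v_i)$ for all $i\in[n]$; $(w_j,t)$ for all $j\in[m]$; and $(v_i,w_j)$ for all $(i,j)\in[n]\times[m]$ such that ($i\leq k$ or $j\leq \nu-k$) and $i+j\neq \nu+1$. The capacity $c$ is: $c((s,v_i))=a_i-1$ for $i\in[k]$ and $a_i$ for $i\in[n]\setminus[k]$; $c((w_j,t))=b_j-1$ for $j\in[\nu-k]$ and $b_j$ for $j\in[m]\setminus[\nu-k]$; and $c((v_i,w_j))=1$ for every arc $(v_i,w_j)$. Here $[k]$ denotes $\{1,\ldots,k\}$. An $s$-$t$-cut generated by a vertex set $X$ with $s\in X$, $t\notin X$ is the set of arcs from $X$ to its complement; its capacity is the sum of their capacities. Write $X=\{s\}\cup S_1\cup S_2\cup T_1\cup T_2$ with $S_1\subseteq\{v_1,\ldots,v_k\}$, $S_2\subseteq\{v_{k+1},\ldots,v_n\}$, $T_1\subseteq\{w_1,\ldots,w_{\nu-k}\}$,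 $T_2\subseteq\{w_{\nu-k+1},\ldots,w_m\}$. The cut is clean if: (1) if $v_i\in S_1$ and $v_j\in\{v_1,\ldots,v_k\}\setminus S_1$ then $a_i\geq a_j$; (2) if $w_i\in T_1$ and $w_j\in\{w_1,\ldots,w_{\nu-k}\}\setminus T_1$ then $b_i\leq b_j$; (3) if $v_i\in S_2$ and $v_j\in\{v_{k+1},\ldots,v_n\}\setminus S_2$ then $a_i\geq a_j$; (4) if $w_i\in T_2$ and $w_j\in\{w_{\nu-k+1},\ldots,w_m\}\setminus T_2$ then $b_i\leq b_j$; (5) if $v_i\in S_1$, $v_j\in\{v_1,\ldots,v_k\}\setminus S_1$ and $a_i=a_j$, then $i>j$; (6) if $v_i\in S_2$, $v_j\in\{v_{k+1},\ldots,v_n\}\setminus S_2$ and $a_i=a_j$, then $i>j$. *)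

(* Defs.v *)
From HB Require Import structures.
From mathcomp Require Import all_boot all_order all_algebra.
Set Implicit Arguments. Unset Strict Implicit. Unset Printing Implicit Defensive.
Import Order.TTheory GRing.Theory Num.Theory.

(* Vertices of the network N(d_A,d_B,nu,k):
   inl true = s, inl false = t, inr (inl i) = v_(i+1), inr (inr j) = w_(j+1).
   Indices are 0-based: ordinal i : 'I_n stands for the paper's index i+1. *)
Definition vert (n m : nat) : finType := (bool + ('I_n + 'I_m))%type.

Definition src {n m} : vert n m := inl true.
Definition tgt {n m} : vert n m := inl false.
Definition vv {n m} (i : 'I_n) : vert n m := inr (inl i).
Definition ww {n m} (j : 'I_m) : vert n m := inr (inr j).

(* Arc relation of D.  Paper: (v_i,w_j) is an arc iff (i <= k or j <= nu-k)
   and i + j <> nu + 1 (1-based); with 0-based i', j' this reads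
   (i' < k or j' < nu - k) and i' + j' + 1 <> nu. *)
Definition arc (n m nu k : nat) (u v : vert n m) : bool :=
  match u, v with
  | inl true, inr (inl _) => true
  | inr (inr _), inl false => true
  | inr (inl i), inr (inr j) => ((i < k) || (j < nu - k)) && (i + j + 1 != nu)
  | _, _ => false
  end.

(* Capacities (integers: a_i - 1 may be -1 when a_i = 0). *)
Definition cap (n m nu k : nat) (a : 'I_n -> nat) (b : 'I_m -> nat)
    (u v : vert n m) : int :=
  match u, v with
  | inl true, inr (inl i) => ((a i)%:Z - (i < k : nat)%:Z)%R
  | inr (inr j), inl false => ((b j)%:Z - (j < nu - k : nat)%:Z)%R
  | inr (inl _), inr (inr _) => 1%R
  | _, _ => 0%R
  end.

Definition cut_cap (n m nu k : nat) (a : 'I_n -> nat) (b : 'I_m -> nat)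
    (X : {set vert n m}) : int :=
  (\sum_(u in X) \sum_(v | (v \notin X) && arc nu k u v) cap nu k a b u v)%R.

Definition is_st_cut_set (n m : nat) (X : {set vert n m}) : Prop :=
  src \in X /\ tgt \notin X.

(* Conditions (1)-(6) of cleanness. S1 = X ∩ {v_1..v_k}, S2 = X ∩ {v_(k+1)..v_n},
   T1 = X ∩ {w_1..w_(nu-k)}, T2 = X ∩ {w_(nu-k+1)..w_m}. *)
Definition clean (n m nu k : nat) (a : 'I_n -> nat) (b : 'I_m -> nat)
    (X : {set vert n m}) : Prop :=
      (forall i j : 'I_n, i < k -> j < k -> vv i \in X -> vv j \notin X ->
         a j <= a i) /\
      (forall i j : 'I_m, i < nu - k -> j < nu - k -> ww i \in X -> ww j \notin X ->
         b i <= b j) /\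
      (forall i j : 'I_n, k <= i -> k <= j -> vv i \in X -> vv j \notin X ->
         a j <= a i) /\
      (forall i j : 'I_m, nu - k <= i -> nu - k <= j -> ww i \in X -> ww j \notin X ->
         b i <= b j) /\
      (forall i j : 'I_n, i < k -> j < k -> vv i \in X -> vv j \notin X ->
         a i = a j -> j < i)
    /\
      (forall i j : 'I_n, k <= i -> k <= j -> vv i \in X -> vv j \notin X ->
         a i = a j -> j < i).

(* Main.v *)
Require Import Defs.
From HB Require Import structures.
From mathcomp Require Import all_boot all_order all_algebra zify.
Import Order.TTheory GRing.Theory Num.Theory.
Set Implicit Arguments. Unset Strict Implicit.
Open Scope ring_scope.

Definition mkX n m (S : {set 'I_n}) (T : {set 'I_m}) : {set vert n m} :=
  [set x : vert n m | match x with
                      | inl c => c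
                      | inr (inl i) => i \in S
                      | inr (inr j) => j \in T end].

Definition arcvw n m (nu k : nat) (i : 'I_n) (j : 'I_m) : bool :=
  ((i < k)%N || (j < nu - k)%N) && (i + j + 1 != nu)%N.

Definition alpha n (k : nat) (a : 'I_n -> nat) (i : 'I_n) : int :=
  ((a i)%:Z - (i < k : nat)%:Z)%R.
Definition beta m (nu k : nat) (b : 'I_m -> nat) (j : 'I_m) : int :=
  ((b j)%:Z - (j < nu - k : nat)%:Z)%R.

Definition G n m nu k a b (S : {set 'I_n}) (T : {set 'I_m}) : int :=
  \sum_i (if i \in S then 0 else alpha k a i)
  + \sum_j (if j \in T then beta nu k b j else 0)
  + \sum_i \sum_j (if [&& i \in S, j \notin T & arcvw nu k i j] then 1 else 0).

Lemma piece_src n m nu k a b (S : {set 'I_n}) (T : {set 'I_m}) :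
  \sum_(v | (v \notin mkX S T) && Defs.arc nu k src v) cap nu k a b src v
  = \sum_i (if i \in S then 0 else alpha k a i).
Proof.
rewrite big_mkcond big_sumType big_bool big_sumType /= !inE /= !add0r.
rewrite [X in _ + X]big1 ?addr0; last by move=> j _; rewrite andbF.
by apply: eq_bigr => i _; rewrite !inE andbT; case: (i \in S).
Qed.

Lemma piece_v n m nu k a b (S : {set 'I_n}) (T : {set 'I_m}) i :
  \sum_(v | (v \notin mkX S T) && Defs.arc nu k (vv i) v) cap nu k a b (vv i) v
  = \sum_j (if (j \notin T) && arcvw nu k i j then 1 else 0).
Proof.
rewrite big_mkcond big_sumType big_bool big_sumType /= !inE /= !add0r.
rewrite [X in X + _]big1 ?add0r; last by move=> j _; rewrite andbF.
by apply: eq_bigr => j _; rewrite !inE.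
Qed.

Lemma piece_w n m nu k a b (S : {set 'I_n}) (T : {set 'I_m}) j :
  \sum_(v | (v \notin mkX S T) && Defs.arc nu k (ww j) v) cap nu k a b (ww j) v
  = beta nu k b j.
Proof.
rewrite big_mkcond big_sumType big_bool big_sumType /= !inE /=.
rewrite big1 ?big1 ?addr0 ?add0r //; by move=> x _; rewrite andbF.
Qed.

Lemma cut_cap_mk n m nu k a b S T :
  cut_cap nu k a b (mkX S T) = G (n:=n) (m:=m) nu k a b S T.
Proof.
rewrite /cut_cap /G big_mkcond big_sumType big_bool big_sumType.
rewrite (piece_src nu k a b S T).
transitivity (\sum_i (if i \in S then 0 else alpha k a i) + 0 +
  (\sum_i \sum_j (if [&& i \in S, j \notin T & arcvw nu k i j] then 1 else 0)
   + \sum_j (if j \in T then beta nu k b j else 0))).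
  congr (_ + _ + (_ + _)).
  - by rewrite inE.
  - by rewrite inE.
  - apply: eq_bigr => i _; rewrite (piece_v nu k a b S T i) inE /=.
    by case: (i \in S) => //=; rewrite big1.
  - apply: eq_bigr => j _; rewrite (piece_w nu k a b S T j) inE /=.
    by case: (j \in T).
by rewrite addr0 [X in _ + X]addrC addrA.
Qed.

Lemma mkX_eta n m (X : {set vert n m}) : is_st_cut_set X ->
  X = mkX [set i | vv i \in X] [set j | ww j \in X].
Proof.
case=> Hs Ht; apply/setP => x; rewrite inE.
case: x => [[]|[i|j]] /=.
- exact: Hs.
- exact: (negbTE Ht).
- by rewrite inE.
- by rewrite inE.
Qed.

Lemma st_mk n m (S : {set 'I_n}) (T : {set 'I_m}) : is_st_cut_set (mkX S T).
Proof. by split; rewrite inE. Qed.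

Lemma count_bound (I : finType) (P R : pred I) :
  (forall x y, ~~ R x -> ~~ R y -> x = y) ->
  (\sum_x (if P x then 1 else 0 : int)) - 1
     <= \sum_x (if P x && R x then 1 else 0 : int)
  /\ \sum_x (if P x && R x then 1 else 0 : int)
     <= \sum_x (if P x then 1 else 0 : int).
Proof.
move=> Huniq.
have Hsplit : \sum_x (if P x then 1 else 0 : int) =
   \sum_x (if P x && R x then 1 else 0 : int) + \sum_x (if P x && ~~ R x then 1 else 0 : int).
  rewrite -big_split /=; apply: eq_bigr => x _.
  by case: (P x); case: (R x); rewrite ?addr0 ?add0r.
have H0 : 0 <= \sum_x (if P x && ~~ R x then 1 else 0 : int).
  by apply: sumr_ge0 => x _; case: ifP.
have H1 : \sum_x (if P x && ~~ R x then 1 else 0 : int) <= 1.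
  case: (pickP (fun x => ~~ R x)) => [x0 Hx0|Hnone].
  - rewrite (bigD1 x0) //= big1 ?addr0; first by case: ifP.
    move=> y Hy; case: ifP => // /andP [_ HRy].
    by move: Hy; rewrite (Huniq _ _ HRy Hx0) eqxx.
  - rewrite big1 // => x _; by rewrite Hnone andbF.
rewrite Hsplit; split; lia.
Qed.

Definition Dc n m nu k (T : {set 'I_m}) (i : 'I_n) : int :=
  \sum_j (if (j \notin T) && arcvw nu k i j then 1 else 0).
Definition Ec n m nu k (S : {set 'I_n}) (j : 'I_m) : int :=
  \sum_i (if (i \in S) && arcvw nu k i j then 1 else 0).

Lemma formA n m nu k a b S T :
  G (n:=n) (m:=m) nu k a b S T =
  \sum_i (if i \in S then Dc nu k T i else alpha k a i)
  + \sum_j (if j \in T then beta nu k b j else 0).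
Proof.
rewrite /G -addrA [X in _ + X]addrC addrA -big_split /=; congr (_ + _).
apply: eq_bigr => i _; rewrite /Dc; case: (i \in S) => /=; last first.
  by rewrite big1 ?addr0.
by rewrite add0r.
Qed.

Lemma formB n m nu k a b S T :
  G (n:=n) (m:=m) nu k a b S T =
  \sum_i (if i \in S then 0 else alpha k a i)
  + \sum_j (if j \in T then beta nu k b j else Ec nu k S j).
Proof.
rewrite /G -addrA exchange_big -big_split /=; congr (_ + _).
apply: eq_bigr => j _; rewrite /Ec; case: (j \in T) => /=.
  by rewrite big1 ?addr0 // => i _; rewrite andbF.
by rewrite add0r.
Qed.

Definition uT m (T : {set 'I_m}) : int := \sum_j (if j \notin T then 1 else 0).
Definition u1T m nu k (T : {set 'I_m}) : int :=
  \sum_j (if (j \notin T) && (j < nu - k)%N then 1 else 0).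
Definition sS n (S : {set 'I_n}) : int := \sum_i (if i \in S then 1 else 0).
Definition s1S n k (S : {set 'I_n}) : int :=
  \sum_i (if (i \in S) && (i < k)%N then 1 else 0).

Definition Sstar n m nu k (a : 'I_n -> nat) (T : {set 'I_m}) : {set 'I_n} :=
  [set i : 'I_n | if (i < k)%N then uT T < (a i)%:Z else u1T nu k T <= (a i)%:Z].
Definition Tstar n m nu k (b : 'I_m -> nat) (S : {set 'I_n}) : {set 'I_m} :=
  [set j : 'I_m | if (j < nu - k)%N then (b j)%:Z <= sS S else (b j)%:Z < s1S k S].

Lemma uniq_nu n m nu (i : 'I_n) : forall x y : 'I_m,
  ~~ (i + x + 1 != nu)%N -> ~~ (i + y + 1 != nu)%N -> x = y.
Proof. move=> x y; rewrite !negbK => /eqP H1 /eqP H2; apply: val_inj => /=; lia. Qed.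

Lemma uniq_nu' n m nu (j : 'I_m) : forall x y : 'I_n,
  ~~ (x + j + 1 != nu)%N -> ~~ (y + j + 1 != nu)%N -> x = y.
Proof. move=> x y; rewrite !negbK => /eqP H1 /eqP H2; apply: val_inj => /=; lia. Qed.

Lemma Dc_bounds n m nu k (T : {set 'I_m}) (i : 'I_n) :
  if (i < k)%N then uT T - 1 <= Dc nu k T i <= uT T
  else u1T nu k T - 1 <= Dc nu k T i <= u1T nu k T.
Proof.
rewrite /Dc /arcvw; case: ifP => Hik /=.
- have [H1 H2] := @count_bound _ (fun j : 'I_m => j \notin T) (fun j : 'I_m => (i + j + 1 != nu)%N) (@uniq_nu n m nu i).
  rewrite /uT; under eq_bigr => j _ do rewrite Hik /=.
  by apply/andP; split.
- have [H1 H2] := @count_bound _ (fun j : 'I_m => (j \notin T) && (j < nu - k)%N) (fun j : 'I_m => (i + j + 1 != nu)%N) (@uniq_nu n m nu i).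
  rewrite /u1T; under eq_bigr => j _ do rewrite Hik /= andbA.
  by apply/andP; split.
Qed.

Lemma Ec_bounds n m nu k (S : {set 'I_n}) (j : 'I_m) :
  if (j < nu - k)%N then sS S - 1 <= Ec nu k S j <= sS S
  else s1S k S - 1 <= Ec nu k S j <= s1S k S.
Proof.
rewrite /Ec /arcvw; case: ifP => Hjk /=.
- have [H1 H2] := @count_bound _ (fun i : 'I_n => i \in S) (fun i : 'I_n => (i + j + 1 != nu)%N) (@uniq_nu' n m nu j).
  rewrite /sS; under eq_bigr => i _ do rewrite Hjk orbT /=.
  by apply/andP; split.
- have [H1 H2] := @count_bound _ (fun i : 'I_n => (i \in S) && (i < k)%N) (fun i : 'I_n => (i + j + 1 != nu)%N) (@uniq_nu' n m nu j).
  rewrite /s1S; under eq_bigr => i _ do rewrite Hjk orbF andbA.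
  by apply/andP; split.
Qed.

Lemma stepA n m nu k a b (S : {set 'I_n}) (T : {set 'I_m}) :
  G nu k a b (Sstar nu k a T) T <= G nu k a b S T.
Proof.
rewrite !formA lerD2r; apply: ler_sum => i _.
have := Dc_bounds nu k T i; rewrite /Sstar inE /alpha.
case: ifP => Hik /andP [H1 H2].
- case: ifP => HS; case: ifP => HS' //; lia.
- case: ifP => HS; case: ifP => HS' //; lia.
Qed.

Lemma stepB n m nu k a b (S : {set 'I_n}) (T : {set 'I_m}) :
  G nu k a b S (Tstar nu k b S) <= G nu k a b S T.
Proof.
rewrite !formB lerD2l; apply: ler_sum => j _.
have := Ec_bounds nu k S j; rewrite /Tstar inE /beta.
case: ifP => Hjk /andP [H1 H2].
- case: ifP => HS; case: ifP => HS' //; lia.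
- case: ifP => HS; case: ifP => HS' //; lia.
Qed.

Close Scope ring_scope.

Theorem lemma3 (n m : nat) (a : 'I_n -> nat) (b : 'I_m -> nat) (nu k : nat) :
  0 < n -> 0 < m ->
  (forall i j : 'I_n, i <= j -> a j <= a i) ->
  (forall i j : 'I_m, i <= j -> b j <= b i) ->
  k <= nu -> nu <= minn n m ->
  exists X : {set vert n m},
    [/\ is_st_cut_set X,
        (forall Y : {set vert n m}, is_st_cut_set Y ->
           (cut_cap nu k a b X <= cut_cap nu k a b Y)%R)
      & clean nu k a b X].
Proof.
move=> _ _ _ _ _ _.
pose P := fun X : {set vert n m} => (src \in X) && (tgt \notin X).
have P0 : P (mkX set0 set0) by apply/andP; apply: st_mk.
have [X0 PX0 HX0] := @real_arg_minP _ _ _ P (cut_cap nu k a b) P0 (fun X _ => num_real _).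
have HX0' : is_st_cut_set X0 by move/andP: PX0.
pose S0 := [set i | vv i \in X0]; pose T0 := [set j | ww j \in X0].
pose S1 := Sstar nu k a T0; pose T1 := Tstar nu k b S1.
exists (mkX S1 T1); split.
- exact: st_mk.
- move=> Y HY.
  apply: (le_trans _ (HX0 Y (introT andP HY))).
  rewrite (mkX_eta HX0') !cut_cap_mk.
  exact: le_trans (stepB _ _ _ _ _ _) (stepA _ _ _ _ _ _).
- rewrite /clean /S1 /T1 /Sstar /Tstar; split; [|split; [|split; [|split; [|split]]]].
  + move=> i j Hi Hj; rewrite !inE /= !inE Hi Hj => Hi' Hj'; lia.
  + move=> i j Hi Hj; rewrite !inE /= !inE Hi Hj => Hi' Hj'; lia.
  + move=> i j Hi Hj; rewrite !inE /= !inE ltnNge Hi ltnNge Hj /= => Hi' Hj'; lia.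
  + move=> i j Hi Hj; rewrite !inE /= !inE ltnNge Hi ltnNge Hj /= => Hi' Hj'; lia.
  + move=> i j Hi Hj; rewrite !inE /= !inE Hi Hj => Hi' Hj' Ha; lia.
  + move=> i j Hi Hj; rewrite !inE /= !inE ltnNge Hi ltnNge Hj /= => Hi' Hj' Ha; lia.
Qed.
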